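(* There is $\alpha_0>0$ such that for every $\alpha\in(0,\alpha_0]$ with $1/\alpha\in\mathbb{N}$ there is $\vartheta_0>0$ such that for every $0<\vartheta\leq\vartheta_0$ there is $n_0$ such that for all $n\geq n_0$ the following holds. Let $H=([n],E)$ be a $3$-uniform hypergraph with $d(i,j)\geq\min\left(i,j,\frac{n}{2}\right)+\alpha n$ for all $\{i,j\}\in[n]^{(2)}$, and let $\mathcal{R}\subseteq[n]$ be a set with $\frac{\vartheta^2}{2}n\leq|\mathcal{R}|\leq\vartheta^2 n$ such that, for some positive integer $L$, for all disjoint ordered pairs of distinct vertices $(x,y),(w,z)\in[n]^2$ there are at least $\vartheta|\mathcal{R}|^{L-2}/2$ tight paths of length $L$ in $H$ connecting $(x,y)$ and $(w,z)$ with all internal vertices in $\mathcal{R}$. Then for every $x\in[n]$, the number of $(x,\alpha)$-absorbers lying in $([n]\setminus\mathcal{R})^{4s(\alpha)}$ is at least $\left(\frac{\alpha n}{3}\right)^{4s(\alpha)}$, where $s(\alpha)=2/\alpha$.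
   Context: Vertices are the integers $[n]$, compared as integers. $d(v,w)=|\{x:\{v,w,x\}\in E\}|$ is the pair degree. A tight path of length $\ell$ is a 3-graph on distinct vertices $x_1,\dots,x_{\ell+2}$ with edges $x_ix_{i+1}x_{i+2}$, $i\in[\ell]$; we write it as the vertex sequence $x_1x_2\dots x_{\ell+2}$; it connects $(x_1,x_2)$ and $(x_{\ell+1},x_{\ell+2})$ and has internal vertices $x_3,\dots,x_\ell$. Absorber: with $s=s(\alpha)=2/\alpha$ (an even integer), for $x\in[n]$ a $4s$-tuple $(v_1,w_1,y_1,z_1,\dots,v_s,w_s,y_s,z_s)\in[n]^{4s}$ of distinct vertices is an $(x,\alpha)$-absorber in $H$ if (1) $v_1w_1xy_1z_1$ is a tight path in $H$; (2) for each $i\in[s-1]$, $v_iw_iy_{i+1}z_{i+1}$ and $v_{i+1}w_{i+1}y_iz_i$ are tight paths in $H$; (3) $v_sw_sy_sz_s$ is a tight path in $H$. *)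

(* Defs.v *)
From HB Require Import structures.
From mathcomp Require Import all_boot all_order all_algebra.
From mathcomp Require Import reals.
Set Implicit Arguments. Unset Strict Implicit. Unset Printing Implicit Defensive.
Import Order.TTheory GRing.Theory Num.Theory.

(* Vertex set [n] = {1,...,n} is represented by 'I_n : the ordinal i stands
   for the vertex i+1 (the integer value is used only in the degree
   condition, where we write (i+1)). *)

Section Hyp.
Variable n : nat.
Implicit Types (E : {set {set 'I_n}}) (u v w : 'I_n).

Definition three_uniform E : Prop := forall e, e \in E -> #|e| = 3.

Definition is_edge E u v w : bool := [set u; v; w] \in E.

Definition pair_deg E v w : nat := #|[set x | is_edge E v w x]|.

Fixpoint tight_edges E (s : seq 'I_n) : bool :=
  match s with
  | x :: ((y :: z :: _) as s') => is_edge E x y z && tight_edges E s'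
  | _ => true
  end.

Definition tight_path E (s : seq 'I_n) : bool :=
  (3 <= size s) && uniq s && tight_edges E s.

(* tight paths of length L (as vertex sequences x_1..x_{L+2}) connecting
   (x,y) and (w,z) with all internal vertices x_3..x_L in Rs *)
Definition conn_paths E (Rs : {set 'I_n}) (L : nat) (x y w z : 'I_n)
  : {set (L.+2).-tuple 'I_n} :=
  [set t : (L.+2).-tuple 'I_n |
     [&& tight_path E t,
         nth x t 0 == x, nth x t 1 == y,
         nth x t L == w, nth x t L.+1 == z &
         all (fun i => nth x t i \in Rs) (iota 2 (L - 2))]].

(* (x,alpha)-absorber with s = s(alpha); t lists
   (v_1,w_1,y_1,z_1,...,v_s,w_s,y_s,z_s); 0-based block index i *)
Definition absorber E (s : nat) (x : 'I_n) (t : (4 * s).-tuple 'I_n) : bool :=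
  let v i := nth x t (4 * i) in
  let w i := nth x t (4 * i + 1) in
  let y i := nth x t (4 * i + 2) in
  let z i := nth x t (4 * i + 3) in
  [&& uniq t,
      tight_path E [:: v 0; w 0; x; y 0; z 0],
      all (fun i => tight_path E [:: v i; w i; y i.+1; z i.+1]
                 && tight_path E [:: v i.+1; w i.+1; y i; z i])
          (iota 0 (s - 1)) &
      tight_path E [:: v (s - 1); w (s - 1); y (s - 1); z (s - 1)]].

Definition absorbers_outside E (Rs : {set 'I_n}) (s : nat) (x : 'I_n)
  : {set (4 * s).-tuple 'I_n} :=
  [set t | @absorber E s x t & all (fun u => u \notin Rs) t].

End Hyp.
Arguments absorber {n} E s x t.
Arguments conn_paths {n} E Rs L x y w z.
Arguments absorbers_outside {n} E Rs s x.
Arguments pair_deg {n} E v w.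
Arguments tight_path {n} E s.

(* Main.v *)
Require Import Defs.
From mathcomp Require Import all_boot all_order all_algebra.
From mathcomp Require Import reals.
From mathcomp Require Import zify ring lra.
Set Implicit Arguments. Unset Strict Implicit. Unset Printing Implicit Defensive.
Import Order.TTheory GRing.Theory Num.Theory.
Local Open Scope ring_scope.

Section Count.
Variable T : finType.
Variable P : seq T -> T -> bool.

Fixpoint goodf (pre s : seq T) : bool :=
  if s is y :: s' then P pre y && goodf (rcons pre y) s' else true.

Lemma card_cons m pre :
  #|[set t : m.+1.-tuple T | goodf pre t]| =
  (\sum_(y | P pre y) #|[set t : m.-tuple T | goodf (rcons pre y) t]|)%N.
Proof.
rewrite -sum1dep_card.
rewrite (@reindex _ _ _ _ (T * m.-tuple T)%type (fun p : T * m.-tuple T => [tuple of p.1 :: p.2])) /=; last first.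
  exists (fun t : m.+1.-tuple T => ((thead t, [tuple of behead t]) : T * m.-tuple T)).
    move=> [y t] _ /=; congr pair.
    by apply: val_inj.
  by move=> t _; rewrite [RHS]tuple_eta; apply: val_inj.
rewrite -(pair_big_dep (fun y => P pre y) (fun y (t : m.-tuple T) => goodf (rcons pre y) t) (fun _ _ => 1%N)) /=.
by apply: eq_bigr => y _; rewrite sum1dep_card.
Qed.

Variable R : realType.
Local Open Scope ring_scope.

Lemma count_good (c : R) : 0 <= c -> forall m pre,
  (forall s, (size s < m)%N -> goodf pre s ->
      c <= #|[set y | P (pre ++ s) y]|%:R) ->
  c ^+ m <= #|[set t : m.-tuple T | goodf pre t]|%:R.
Proof.
move=> c0; elim=> [|m IH] pre H.
  rewrite expr0 (_ : [set t : 0.-tuple T | goodf pre t] = setT).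
    by rewrite cardsT card_tuple expn0.
  by apply/setP => t; rewrite !inE tuple0.
rewrite card_cons natr_sum exprS.
have H0 := H [::] isT isT; rewrite cats0 in H0.
apply: (le_trans (ler_wpM2r (exprn_ge0 _ c0) H0)).
rewrite -sum1dep_card natr_sum mulr_suml.
apply: ler_sum => y Py; rewrite mul1r.
apply: IH => s Hs Hg.
rewrite cat_rcons; apply: H => //=.
by rewrite Py.
Qed.

Lemma goodfP x0 pre s : goodf pre s ->
  forall j, (j < size s)%N -> P (pre ++ take j s) (nth x0 s j).
Proof.
elim: s pre => [|y s IH] pre //= /andP[Py Hg] [|j] Hj /=.
  by rewrite cats0.
by rewrite -cat_rcons; apply: IH.
Qed.
End Count.

Section Abs.
Variable R : realType.
Variable n : nat.
Variable E : {set {set 'I_n}}.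
Variable Rs : {set 'I_n}.
Variable x : 'I_n.
Variable k : nat.
Variable alpha : R.

Local Notation N := (n%:R : R).

Definition Tth (i : nat) : R := Num.min (i%:R * alpha * N / 2) (N / 2).

Definition lab (u : 'I_n) : R := (u.+1)%:R.

Definition nb (a b : 'I_n) : {set 'I_n} := [set u | is_edge E a b u].

Definition Qc (i r : nat) (g : nat -> 'I_n) (u : 'I_n) : bool :=
  if i == 0%N then
    (if r == 0%N then true
     else if r == 1%N then is_edge E x (g 0%N) u
     else if r == 2%N then is_edge E x (g 0%N) u
     else is_edge E (g 1%N) x u)
  else
    (if r == 0%N then is_edge E (g (4*i.-1+3)%N) (g (4*i.-1+1)%N) u
     else if r == 1%N then is_edge E (g (4*i.-1+0)%N) (g (4*i.-1+2)%N) u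
     else if r == 2%N then is_edge E (g (4*i.-1+1)%N) (g (4*i+0)%N) u &&
           ((i == (2*k).-1) ==> is_edge E (g (4*i+1)%N) (g (4*i+0)%N) u)
     else is_edge E (g (4*i+1)%N) (g (4*i.-1+0)%N) u &&
           ((i == (2*k).-1) ==> is_edge E (g (4*i+1)%N) (g (4*i+0)%N) u)).

Definition special (i r : nat) : bool := (i == (2*k).-1) && (1 < r)%N.

Definition labok (i r : nat) (u : 'I_n) : bool :=
  special i r || (Tth i < lab u).

Definition Pc (pre : seq 'I_n) (u : 'I_n) : bool :=
  let j := size pre in
  [&& u \notin Rs, u \notin pre, u != x,
      labok (j %/ 4) (j %% 4) u & Qc (j %/ 4) (j %% 4) (nth x pre) u].

Lemma Qc_ext i r g1 g2 u : (r < 4)%N ->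
  (forall q, (q < 4 * i + r)%N -> g1 q = g2 q) -> Qc i r g1 u = Qc i r g2 u.
Proof.
move=> hr H; rewrite /Qc.
case: ifP => hi.
  move/eqP: hi => hi; subst i.
  case: r hr H => [|[|[|[|r]]]] //= hr H; rewrite ?H //.
case: r hr H => [|[|[|[|r]]]] //= hr H; rewrite !H //; lia.
Qed.


Lemma is_edgeC a b c : is_edge E a b c = is_edge E b a c.
Proof.
rewrite /is_edge; congr (_ \in E); apply/setP => u; rewrite !inE.
by case: (u == a); case: (u == b).
Qed.

Lemma is_edgeR a b c : is_edge E a b c = is_edge E b c a.
Proof.
rewrite /is_edge; congr (_ \in E); apply/setP => u; rewrite !inE.
by case: (u == a); case: (u == b); case: (u == c).
Qed.

Lemma card_low (T : R) : 0 <= T -> #|[set u : 'I_n | lab u <= T]|%:R <= T.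
Proof.
move=> T0; set S := [set u : 'I_n | lab u <= T].
set M := (\max_(u in S) u.+1)%N.
have HM : M%:R <= T.
  rewrite /M; elim/big_ind: _ => //.
    by move=> a b ha hb; rewrite /maxn; case: ifP.
  by move=> u; rewrite inE.
apply: le_trans HM; rewrite ler_nat.
rewrite cardE -(size_map val).
have <- : size (iota 0 M) = M by rewrite size_iota.
apply: uniq_leq_size.
  by rewrite (map_inj_uniq val_inj) enum_uniq.
move=> v /mapP [u]; rewrite mem_enum => uS ->.
rewrite mem_iota /= add0n.
by have := @leq_bigmax_cond _ (mem S) (fun u : 'I_n => u.+1) u uS.
Qed.

Lemma cardU_le (A B : {set 'I_n}) : (#|A :|: B| <= #|A| + #|B|)%N.
Proof. by rewrite cardsU leq_subr. Qed.

Lemma gen_bound (A C : {set 'I_n}) (pre : seq 'I_n) (T : R) :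
  0 <= T -> T + alpha * N / 2 <= #|A|%:R -> (size pre < 8 * k)%N ->
  #|Rs|%:R + (8 * k)%:R <= alpha * N / 6 ->
  (forall u, u \in A -> u \notin Rs -> u \notin pre -> u != x -> T < lab u -> u \in C) ->
  alpha * N / 3 <= #|C|%:R.
Proof.
move=> T0 hA hpre hj H.
have sub : A \subset C :|: Rs :|: [set u | u \in pre] :|: [set x] :|: [set u | lab u <= T].
  apply/subsetP => u uA; rewrite !inE.
  move: (H u uA).
  case: (boolP (u \in Rs)) => uR; rewrite ?orbT ?orTb //=.
  case: (boolP (u \in pre)) => up; rewrite ?orbT ?orTb //=.
  case: (eqVneq u x) => ux; rewrite ?orbT ?orTb //=.
  case: (leP (lab u) T) => lu; rewrite ?orbT ?orTb //=.
  by move=> /(_ isT isT isT isT) ->.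
have c1 := subset_leq_card sub.
have c2 := leq_trans c1 (cardU_le _ _).
have c3 := leq_trans c2 (leq_add (cardU_le _ _) (leqnn _)).
have c4 := leq_trans c3 (leq_add (leq_add (cardU_le _ _) (leqnn _)) (leqnn _)).
have c5 := leq_trans c4 (leq_add (leq_add (leq_add (cardU_le _ _) (leqnn _)) (leqnn _)) (leqnn _)).
rewrite cards1 in c5.
have hp : (#|[set u | u \in pre]| <= size pre)%N.
  by apply: leq_trans (card_size pre); apply: subset_leq_card; apply/subsetP => u; rewrite !inE.
have hL := card_low T0.
have hp' : (#|[set u | u \in pre]| + 1 <= 8 * k)%N by rewrite addn1; apply: leq_ltn_trans hp hpre.
move: c5; rewrite -(ler_nat R) !natrD => c5.
move: hp'; rewrite -(ler_nat R) natrD => hp'.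
lra.
Qed.


Hypothesis alpha_gt0 : 0 < alpha.
Hypothesis alphak : alpha * k%:R = 1.
Hypothesis hdeg : forall i j : 'I_n, i != j ->
   Num.min (Num.min (i.+1)%:R (j.+1)%:R) (N / 2) + alpha * N <= (pair_deg E i j)%:R.

Lemma N_ge0 : 0 <= N. Proof. by rewrite ler0n. Qed.

Lemma Tth_ge0 i : 0 <= Tth i.
Proof.
rewrite /Tth le_min; have := N_ge0; have : 0 <= i%:R :> R by rewrite ler0n.
move=> h1 h2; apply/andP; split; last lra.
apply: divr_ge0; last lra.
apply: mulr_ge0; last exact: N_ge0.
apply: mulr_ge0; [exact: ler0n | exact: ltW].
Qed.

Lemma Tth_le i : Tth i <= N / 2.
Proof. by rewrite /Tth ge_min lexx orbT. Qed.

Lemma min_step (a b a' d : R) : 0 <= d -> a <= a' + d -> Num.min a b <= Num.min a' b + d.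
Proof.
move=> d0 h.
have m1 : Num.min a b <= a by rewrite ge_min lexx.
have m2 : Num.min a b <= b by rewrite ge_min lexx orbT.
rewrite -lerBlDr le_min; apply/andP; split; lra.
Qed.

Lemma Tth_step i i' : (i <= i'.+1)%N -> Tth i <= Tth i' + alpha * N / 2.
Proof.
move=> hi; rewrite /Tth.
have hN := N_ge0. have ha := alpha_gt0.
have h1 : i%:R * alpha * N / 2 <= i'%:R * alpha * N / 2 + alpha * N / 2.
  have : i%:R <= i'%:R + 1 :> R by rewrite natr1 ler_nat.
  move=> h; have : 0 <= alpha * N by apply: mulr_ge0 => //; lra.
  move=> h2; have := ler_wpM2r h2 h; rewrite mulrDl mul1r => h3.
  have -> : i%:R * alpha * N / 2 = (i%:R * (alpha * N)) / 2 by rewrite mulrA.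
  have -> : i'%:R * alpha * N / 2 = (i'%:R * (alpha * N)) / 2 by rewrite mulrA.
  lra.
apply: min_step => //; have : 0 <= alpha * N by apply: mulr_ge0 => //; lra.
lra.
Qed.

Lemma Tth_top i : (k <= i)%N -> Tth i = N / 2.
Proof.
move=> hi; rewrite /Tth; apply/eqP; rewrite eq_le ge_min lexx orbT /= le_min lexx andbT.
have hN := N_ge0. have ha := alpha_gt0. have hak := alphak.
have : k%:R <= i%:R :> R by rewrite ler_nat.
move=> h; have := ler_wpM2l (ltW ha) h; rewrite alphak (mulrC alpha).
move=> h2; have := ler_wpM2r hN h2; rewrite mul1r => h3.
lra.
Qed.

Lemma deg_single a b i : a != b -> Tth i - alpha * N / 2 <= lab a ->
  Tth i - alpha * N / 2 <= lab b -> Tth i + alpha * N / 2 <= #|nb a b|%:R.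
Proof.
move=> ab ha hb; have hal := alpha_gt0; have := hdeg ab; rewrite /pair_deg -/(nb a b).
have := Tth_le i.
have : Tth i - alpha * N / 2 <= Num.min (Num.min (a.+1)%:R (b.+1)%:R) (N / 2).
  rewrite !le_min ha hb /=; have := Tth_le i; have := N_ge0 => hN.
  have : 0 <= alpha * N by apply: mulr_ge0 => //; lra.
  lra.
lra.
Qed.

Lemma deg_high a b : a != b -> N / 2 <= lab a -> N / 2 <= lab b ->
  N / 2 + alpha * N <= #|nb a b|%:R.
Proof.
move=> ab ha hb; have hal := alpha_gt0; have := hdeg ab; rewrite /pair_deg -/(nb a b).
have -> : Num.min (Num.min (a.+1)%:R (b.+1)%:R) (N / 2) = N / 2.
  by apply/eqP; rewrite eq_le ge_min lexx orbT /= le_min lexx andbT le_min ha hb.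
done.
Qed.

Lemma card_inter (A B : {set 'I_n}) : #|A|%:R + #|B|%:R - N <= #|A :&: B|%:R :> R.
Proof.
have := cardsUI A B; have : (#|A :|: B| <= n)%N by have := max_card (A :|: B); rewrite card_ord.
move=> h1 h2; rewrite -(ler_nat R) in h1.
have : (#|A :|: B| + #|A :&: B|)%:R = (#|A| + #|B|)%:R :> R by rewrite h2.
rewrite !natrD; lra.
Qed.


Hypothesis hk2 : (2 <= k)%N.
Hypothesis hal1 : alpha <= 1.
Hypothesis hjunk : #|Rs|%:R + (8 * k)%:R <= alpha * N / 6.

Lemma pre_facts pre : goodf Pc [::] pre ->
  [/\ (forall q1 q2, (q1 < q2)%N -> (q2 < size pre)%N -> nth x pre q1 != nth x pre q2),
      (forall q, (q < size pre)%N -> nth x pre q != x) &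
      (forall q, (q < size pre)%N -> ~~ special (q %/ 4) (q %% 4) ->
          Tth (q %/ 4) < lab (nth x pre q))].
Proof.
move=> g.
have HP q : (q < size pre)%N -> Pc (take q pre) (nth x pre q).
  by move=> hq; have := goodfP x g hq.
split.
- move=> q1 q2 h12 h2; have := HP q2 h2; rewrite /Pc => /and5P[_ hn _ _ _].
  apply/eqP => e; move: hn; rewrite -e.
  have <- : nth x (take q2 pre) q1 = nth x pre q1 by rewrite nth_take.
  by rewrite mem_nth // size_take h2.
- by move=> q hq; have := HP q hq; rewrite /Pc => /and5P[_ _ hx _ _].
- move=> q hq hs; have := HP q hq; rewrite /Pc => /and5P[_ _ _ hl _].
  by move: hl; rewrite size_take hq /labok (negbTE hs).
Qed.

Lemma div4 a b : (b < 4)%N -> ((4 * a + b) %/ 4 = a)%N /\ ((4 * a + b) %% 4 = b)%N.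
Proof.
move=> hb; split.
  by rewrite mulnC divnMDl // divn_small ?addn0.
by rewrite mulnC modnMDl modn_small.
Qed.

Ltac nsp := rewrite /special; apply/negP => /andP[/eqP ? ?]; lia.

Lemma pre_bound pre : goodf Pc [::] pre -> (size pre < 8 * k)%N ->
  alpha * N / 3 <= #|[set u | Pc pre u]|%:R.
Proof.
move=> g hs.
have [D X F] := pre_facts g.
have ha := alpha_gt0. have hN := N_ge0. have hj := hjunk. have hal := hal1.
have hs0 := hs.
set j := size pre in hs D X F.
set i := (j %/ 4)%N.
set r := (j %% 4)%N.
have hji : j = (4 * i + r)%N by rewrite /i /r mulnC -divn_eq.
have hr : (r < 4)%N by rewrite /r ltn_mod.
have L a b : (4 * a + b < j)%N -> (b < 4)%N -> (i <= a.+1)%N -> ~~ special a b ->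
    Tth i - alpha * N / 2 <= lab (nth x pre (4 * a + b)).
  move=> h1 hb h2 h3; have [e1 e2] := div4 a hb.
  have := F _ h1; rewrite e1 e2 => /(_ h3); have := Tth_step h2; lra.
have H a b : (4 * a + b < j)%N -> (b < 4)%N -> (k <= a)%N -> ~~ special a b ->
    N / 2 <= lab (nth x pre (4 * a + b)).
  move=> h1 hb h2 h3; have [e1 e2] := div4 a hb.
  by have := F _ h1; rewrite e1 e2 => /(_ h3); rewrite Tth_top //; apply: ltW.
have mem u : (u \in [set u | Pc pre u]) =
    [&& u \notin Rs, u \notin pre, u != x, labok i r u & Qc i r (nth x pre) u].
  by rewrite inE.
clearbody i r j.
have hT0 : Tth 0 <= 0 by rewrite /Tth ge_min mul0r mul0r mul0r lexx.
have labge u : 0 <= lab u by rewrite /lab ler0n.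
have aN : 0 <= alpha * N by apply: mulr_ge0 => //; lra.
have Hi : (i < 2 * k)%N by lia.
have aNN : alpha * N <= N by have := ler_wpM2r hN hal1; rewrite mul1r.
case: (posnP i) => hi.
  have hlab0 u : Tth 0 < lab u -> labok i r u by move=> h; rewrite /labok hi h orbT.
  move: hr; case: r mem hji hlab0 => [|[|[|[|r']]]] // mem hji hlab0 _.
  - apply: (@gen_bound setT _ pre (Tth 0)) => //.
    + exact: Tth_ge0.
    + by rewrite cardsT card_ord; lra.
    + move=> u _ h1 h2 h3 h4; rewrite mem h1 h2 h3 hlab0 //=.
      by rewrite /Qc hi.
  - apply: (@gen_bound (nb x (nth x pre 0)) _ pre (Tth 0)) => //.
    + exact: Tth_ge0.
    + apply: deg_single; first by rewrite eq_sym X // hji hi.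
      - have := labge x; lra.
      - have := labge (nth x pre 0); lra.
    + move=> u; rewrite inE => he h1 h2 h3 h4; rewrite mem h1 h2 h3 hlab0 //=.
      by rewrite /Qc hi.
  - apply: (@gen_bound (nb x (nth x pre 0)) _ pre (Tth 0)) => //.
    + exact: Tth_ge0.
    + apply: deg_single; first by rewrite eq_sym X // hji hi.
      - have := labge x; lra.
      - have := labge (nth x pre 0); lra.
    + move=> u; rewrite inE => he h1 h2 h3 h4; rewrite mem h1 h2 h3 hlab0 //=.
      by rewrite /Qc hi.
  - apply: (@gen_bound (nb (nth x pre 1) x) _ pre (Tth 0)) => //.
    + exact: Tth_ge0.
    + apply: deg_single; first by rewrite X // hji hi.
      - have := labge (nth x pre 1); lra.
      - have := labge x; lra.
    + move=> u; rewrite inE => he h1 h2 h3 h4; rewrite mem h1 h2 h3 hlab0 //=.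
      by rewrite /Qc hi.
have hk := hk2.
have hi0 : (i == 0%N) = false by apply/negbTE; rewrite -lt0n.
have hlabi u : Tth i < lab u -> labok i r u by move=> h; rewrite /labok h orbT.
have s0 a : ~~ special a 0 by rewrite /special andbF.
have s1 a : ~~ special a 1 by rewrite /special andbF.
have s2 : ~~ special i.-1 2 by clear -Hi; nsp.
have s3 : ~~ special i.-1 3 by clear -Hi; nsp.
move: hr; case: r mem hji hlabi => [|[|[|[|r']]]] // mem hji hlabi _.
- apply: (@gen_bound (nb (nth x pre (4*i.-1+3)) (nth x pre (4*i.-1+1))) _ pre (Tth i)) => //.
  + exact: Tth_ge0.
  + apply: deg_single; first by rewrite eq_sym D //; clear -hji hs Hi hi; lia.
    - apply: L => //; clear -hji hs Hi hi; lia.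
    - apply: L => //; clear -hji hs Hi hi; lia.
  + move=> u; rewrite inE => he h1 h2 h3 h4; rewrite mem h1 h2 h3 hlabi //=.
    by rewrite /Qc hi0.
- apply: (@gen_bound (nb (nth x pre (4*i.-1+0)) (nth x pre (4*i.-1+2))) _ pre (Tth i)) => //.
  + exact: Tth_ge0.
  + apply: deg_single; first by rewrite D //; clear -hji hs Hi hi; lia.
    - apply: L => //; clear -hji hs Hi hi; lia.
    - apply: L => //; clear -hji hs Hi hi; lia.
  + move=> u; rewrite inE => he h1 h2 h3 h4; rewrite mem h1 h2 h3 hlabi //=.
    by rewrite /Qc hi0.
- case: (eqVneq i (2 * k).-1) => hlast.
  + apply: (@gen_bound (nb (nth x pre (4*i.-1+1)) (nth x pre (4*i+0)) :&: nb (nth x pre (4*i+1)) (nth x pre (4*i+0))) _ pre 0) => //.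
    * have c1 := card_inter (nb (nth x pre (4*i.-1+1)) (nth x pre (4*i+0))) (nb (nth x pre (4*i+1)) (nth x pre (4*i+0))).
      have c2 : N / 2 + alpha * N <= #|nb (nth x pre (4*i.-1+1)) (nth x pre (4*i+0))|%:R.
        apply: deg_high; first by rewrite D //; clear -hji hs Hi hi hk hlast; lia.
        - apply: H => //; clear -hji hs Hi hi hk hlast; lia.
        - apply: H => //; clear -hji hs Hi hi hk hlast; lia.
      have c3 : N / 2 + alpha * N <= #|nb (nth x pre (4*i+1)) (nth x pre (4*i+0))|%:R.
        apply: deg_high; first by rewrite eq_sym D //; clear -hji hs Hi hi hk hlast; lia.
        - apply: H => //; clear -hji hs Hi hi hk hlast; lia.
        - apply: H => //; clear -hji hs Hi hi hk hlast; lia.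
      lra.
    * move=> u /setIP [he1 he2] h1 h2 h3 h4; rewrite /nb !inE in he1 he2; rewrite mem h1 h2 h3 /=.
      by rewrite /Qc hi0 /= he1 he2 implybT /labok /special hlast eqxx.
  + apply: (@gen_bound (nb (nth x pre (4*i.-1+1)) (nth x pre (4*i+0))) _ pre (Tth i)) => //.
    * exact: Tth_ge0.
    * apply: deg_single; first by rewrite D //; clear -hji hs Hi hi; lia.
      - apply: L => //; clear -hji hs Hi hi; lia.
      - apply: L => //; clear -hji hs Hi hi; lia.
    * move=> u; rewrite inE => he h1 h2 h3 h4; rewrite mem h1 h2 h3 hlabi //=.
      by rewrite /Qc hi0 /= he (negbTE hlast).
- case: (eqVneq i (2 * k).-1) => hlast.
  + apply: (@gen_bound (nb (nth x pre (4*i+1)) (nth x pre (4*i.-1+0)) :&: nb (nth x pre (4*i+1)) (nth x pre (4*i+0))) _ pre 0) => //.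
    * have c1 := card_inter (nb (nth x pre (4*i+1)) (nth x pre (4*i.-1+0))) (nb (nth x pre (4*i+1)) (nth x pre (4*i+0))).
      have c2 : N / 2 + alpha * N <= #|nb (nth x pre (4*i+1)) (nth x pre (4*i.-1+0))|%:R.
        apply: deg_high; first by rewrite eq_sym D //; clear -hji hs Hi hi hk hlast; lia.
        - apply: H => //; clear -hji hs Hi hi hk hlast; lia.
        - apply: H => //; clear -hji hs Hi hi hk hlast; lia.
      have c3 : N / 2 + alpha * N <= #|nb (nth x pre (4*i+1)) (nth x pre (4*i+0))|%:R.
        apply: deg_high; first by rewrite eq_sym D //; clear -hji hs Hi hi hk hlast; lia.
        - apply: H => //; clear -hji hs Hi hi hk hlast; lia.
        - apply: H => //; clear -hji hs Hi hi hk hlast; lia.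
      lra.
    * move=> u /setIP [he1 he2] h1 h2 h3 h4; rewrite /nb !inE in he1 he2; rewrite mem h1 h2 h3 /=.
      by rewrite /Qc hi0 /= he1 he2 implybT /labok /special hlast eqxx.
  + apply: (@gen_bound (nb (nth x pre (4*i+1)) (nth x pre (4*i.-1+0))) _ pre (Tth i)) => //.
    * exact: Tth_ge0.
    * apply: deg_single; first by rewrite eq_sym D //; clear -hji hs Hi hi; lia.
      - apply: L => //; clear -hji hs Hi hi; lia.
      - apply: L => //; clear -hji hs Hi hi; lia.
    * move=> u; rewrite inE => he h1 h2 h3 h4; rewrite mem h1 h2 h3 hlabi //=.
      by rewrite /Qc hi0 /= he (negbTE hlast).
Qed.

Lemma ie_perm a b c p q r : is_edge E a b c -> [set a; b; c] = [set p; q; r] ->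
  is_edge E p q r.
Proof. by rewrite /is_edge => h <-. Qed.

Ltac ep h := apply: (ie_perm h); apply/setP => ?; rewrite !inE; by do ! case: (_ == _).

End Abs.

Section Abs2.
Variable R : realType.
Variable n : nat.
Variable E : {set {set 'I_n}}.
Variable Rs : {set 'I_n}.
Variable x : 'I_n.
Variable k : nat.
Variable alpha : R.
Hypothesis hk1 : (0 < k)%N.

Local Notation P := (Pc E Rs x k alpha).
Local Notation m := (4 * (2 * k))%N.

Definition pi4 (r : nat) : nat :=
  if r == 0%N then 3%N else if r == 1%N then 1%N else if r == 2%N then 0%N else 2%N.
Definition rho4 (r : nat) : nat :=
  if r == 0%N then 2%N else if r == 1%N then 1%N else if r == 2%N then 3%N else 0%N.
Definition sig (j : nat) : nat := (4 * (j %/ 4) + pi4 (j %% 4))%N.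
Definition rho (j : nat) : nat := (4 * (j %/ 4) + rho4 (j %% 4))%N.

Lemma pi4_lt r : (pi4 r < 4)%N.
Proof. by rewrite /pi4; case: ifP => //; case: ifP => //; case: ifP. Qed.
Lemma rho4_lt r : (rho4 r < 4)%N.
Proof. by rewrite /rho4; case: ifP => //; case: ifP => //; case: ifP. Qed.

Lemma sig_rho j : sig (rho j) = j.
Proof.
rewrite /sig /rho; have [e1 e2] := div4 (j %/ 4) (rho4_lt (j %% 4)).
rewrite e1 e2.
have hj : j = (4 * (j %/ 4) + j %% 4)%N by rewrite mulnC -divn_eq.
have : (j %% 4 < 4)%N by rewrite ltn_mod.
move: hj; set q := (j %/ 4)%N; set r := (j %% 4)%N; clearbody q r.
case: r => [|[|[|[|r]]]] //= hj _; rewrite /pi4 /rho4 /=; lia.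
Qed.

Lemma rho_sig j : rho (sig j) = j.
Proof.
rewrite /sig /rho; have [e1 e2] := div4 (j %/ 4) (pi4_lt (j %% 4)).
rewrite e1 e2.
have hj : j = (4 * (j %/ 4) + j %% 4)%N by rewrite mulnC -divn_eq.
have : (j %% 4 < 4)%N by rewrite ltn_mod.
move: hj; set q := (j %/ 4)%N; set r := (j %% 4)%N; clearbody q r.
case: r => [|[|[|[|r]]]] //= hj _; rewrite /pi4 /rho4 /=; lia.
Qed.

Lemma sig_lt j m : (j < 4 * m)%N -> (sig j < 4 * m)%N.
Proof.
move=> h; rewrite /sig; have := pi4_lt (j %% 4).
have : (j %/ 4 < m)%N by rewrite ltn_divLR // mulnC.
lia.
Qed.

Lemma rho_lt j m : (j < 4 * m)%N -> (rho j < 4 * m)%N.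
Proof.
move=> h; rewrite /rho; have := rho4_lt (j %% 4).
have : (j %/ 4 < m)%N by rewrite ltn_divLR // mulnC.
lia.
Qed.

Lemma sig_pos a b : (b < 4)%N -> sig (4 * a + b) = (4 * a + pi4 b)%N.
Proof. by move=> hb; have [e1 e2] := div4 a hb; rewrite /sig e1 e2. Qed.

Definition reord (c : (4 * (2 * k)).-tuple 'I_n) : (4 * (2 * k)).-tuple 'I_n :=
  [tuple nth x c (sig j) | j < 4 * (2 * k)].

Lemma nth_reord c j : (j < 4 * (2 * k))%N -> nth x (reord c) j = nth x c (sig j).
Proof. by move=> h; have := nth_mktuple (fun j : 'I_(4 * (2 * k)) => nth x c (sig j)) x (Ordinal h). Qed.

Lemma reord_inj : injective reord.
Proof.
move=> c1 c2 e; apply: val_inj; apply: (@eq_from_nth _ x); first by rewrite !size_tuple.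
move=> q; rewrite size_tuple => hq.
have hr := rho_lt hq.
by rewrite -(sig_rho q) -!nth_reord // e.
Qed.


Lemma cneq c q1 q2 : goodf P [::] c -> size c = m -> (q1 < m)%N -> (q2 < m)%N -> q1 != q2 ->
  nth x c q1 != nth x c q2.
Proof.
move=> g hs h1 h2 h12; have [D _ _] := pre_facts g.
case: (ltngtP q1 q2) => h.
- by apply: D; rewrite // hs.
- by rewrite eq_sym; apply: D; rewrite // hs.
- by move: h12; rewrite h eqxx.
Qed.

Lemma cx c q : goodf P [::] c -> size c = m -> (q < m)%N -> nth x c q != x.
Proof. by move=> g hs h; have [_ X _] := pre_facts g; apply: X; rewrite hs. Qed.

Lemma cQ c i r : goodf P [::] c -> size c = m -> (r < 4)%N -> (4 * i + r < m)%N ->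
  Qc E x k i r (nth x c) (nth x c (4 * i + r)).
Proof.
move=> g hs hr h.
have h' : (4 * i + r < size c)%N by rewrite hs.
have := goodfP x g h'.
rewrite /Pc size_take hs h; have [e1 e2] := div4 i hr; rewrite e1 e2.
case/and5P => _ _ _ _.
by rewrite (@Qc_ext n E x k i r _ (nth x c)) // => q hq; rewrite nth_take // size_take hs h.
Qed.

Lemma cR c q : goodf P [::] c -> size c = m -> (q < m)%N -> nth x c q \notin Rs.
Proof.
move=> g hs h.
have h' : (q < size c)%N by rewrite hs.
have := goodfP x g h'.
by case/and5P.
Qed.

Lemma tp4 a b c d : a != b -> a != c -> a != d -> b != c -> b != d -> c != d ->
  is_edge E a b c -> is_edge E b c d -> tight_path E [:: a; b; c; d].
Proof.
move=> ab ac ad bc bd cd h1 h2.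
by rewrite /tight_path /= !inE !negb_or ab ac ad bc bd cd h1 h2.
Qed.

Lemma tp5 a b c d e : a != b -> a != c -> a != d -> a != e -> b != c -> b != d -> b != e ->
  c != d -> c != e -> d != e ->
  is_edge E a b c -> is_edge E b c d -> is_edge E c d e -> tight_path E [:: a; b; c; d; e].
Proof.
move=> ab ac ad ae bc bd be cd ce de h1 h2 h3.
by rewrite /tight_path /= !inE !negb_or ab ac ad ae bc bd be cd ce de h1 h2 h3.
Qed.

Ltac ep h := apply: (ie_perm h); apply/setP => ?; rewrite !inE; by do ! case: (_ == _).

Ltac dq := first [ apply: cneq => //; lia | rewrite eq_sym; apply: cx => //; lia | apply: cx => //; lia ].

Lemma good_abs (c : m.-tuple 'I_n) : goodf P [::] c ->
  reord c \in absorbers_outside E Rs (2 * k) x.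
Proof.
move=> g.
have hs : size c = m by rewrite size_tuple.
have tv i : (i < 2 * k)%N -> nth x (reord c) (4 * i) = nth x c (4 * i + 3).
  move=> hi; rewrite nth_reord; last lia.
  by have := @sig_pos i 0 isT; rewrite addn0 => ->.
have tw i : (i < 2 * k)%N -> nth x (reord c) (4 * i + 1) = nth x c (4 * i + 1).
  by move=> hi; rewrite nth_reord ?sig_pos //; lia.
have ty i : (i < 2 * k)%N -> nth x (reord c) (4 * i + 2) = nth x c (4 * i + 0).
  by move=> hi; rewrite nth_reord ?sig_pos //; lia.
have tz i : (i < 2 * k)%N -> nth x (reord c) (4 * i + 3) = nth x c (4 * i + 2).
  by move=> hi; rewrite nth_reord ?sig_pos //; lia.
rewrite inE; apply/andP; split; last first.
  apply/allP => u /(nthP x) [j]; rewrite size_tuple => hj <-.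
  by rewrite nth_reord // cR // sig_lt.
rewrite /absorber; apply/and4P; split.
- apply/(uniqP x) => j1 j2; rewrite !inE size_tuple => h1 h2.
  rewrite !nth_reord // => e.
  case: (eqVneq (sig j1) (sig j2)) => [hsg|hsg].
    by rewrite -(rho_sig j1) hsg rho_sig.
  by move: (cneq g hs (sig_lt h1) (sig_lt h2) hsg); rewrite e eqxx.
- have h0 : (0 < 2 * k)%N by lia.
  rewrite (tw 0 h0) (ty 0 h0) (tz 0 h0) (tv 0 h0) ?muln0 ?add0n.
  have e1 : is_edge E (nth x c 1) x (nth x c 3).
    by move: (@cQ c 0 3 g hs isT ltac:(lia)); rewrite /Qc /= ?muln0 ?add0n.
  have e2 : is_edge E x (nth x c 0) (nth x c 1).
    by move: (@cQ c 0 1 g hs isT ltac:(lia)); rewrite /Qc /= ?muln0 ?add0n.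
  have e3 : is_edge E x (nth x c 0) (nth x c 2).
    by move: (@cQ c 0 2 g hs isT ltac:(lia)); rewrite /Qc /= ?muln0 ?add0n.
  apply: tp5; try dq; [ep e1 | ep e2 | exact e3].
- apply/allP => i; rewrite mem_iota add0n => /andP[_ hi].
  have hi0 : (i < 2 * k)%N by lia.
  have hi1 : (i.+1 < 2 * k)%N by lia.
  rewrite (tw i hi0) (ty i hi0) (tz i hi0) (tv i hi0).
  rewrite (tw i.+1 hi1) (ty i.+1 hi1) (tz i.+1 hi1) (tv i.+1 hi1).
  have r0 := @cQ c i.+1 0 g hs isT ltac:(lia).
  have r1 := @cQ c i.+1 1 g hs isT ltac:(lia).
  have r2 := @cQ c i.+1 2 g hs isT ltac:(lia).
  have r3 := @cQ c i.+1 3 g hs isT ltac:(lia).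
  rewrite /Qc /= in r0 r1 r2 r3.
  case/andP: r2 => r2 _; case/andP: r3 => r3 _.
  apply/andP; split.
    by apply: tp4; try dq.
  by apply: tp4; try dq; [ep r3 | ep r1].
- rewrite subn1.
  set p := (2 * k).-1.
  have hp : (p < 2 * k)%N by rewrite /p; lia.
  have hp0 : (p == 0%N) = false by apply/negbTE; rewrite /p; lia.
  rewrite (tw p hp) (ty p hp) (tz p hp) (tv p hp).
  have r2 := @cQ c p 2 g hs isT ltac:(lia).
  have r3 := @cQ c p 3 g hs isT ltac:(lia).
  rewrite /Qc hp0 /= -/p eqxx /= in r2 r3.
  case/andP: r2 => _ r2; case/andP: r3 => _ r3.
  by apply: tp4; try dq; [ep r3 | exact r2].
Qed.

End Abs2.

Unset Implicit Arguments.
Set Strict Implicit.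

Theorem lemma5p2 (R : realType) :
  exists alpha0 : R, 0 < alpha0 /\
  forall (alpha : R) (k : nat),
    0 < alpha -> alpha <= alpha0 -> alpha^-1 = k%:R ->
    (* s(alpha) = 2/alpha = 2k *)
    exists theta0 : R, 0 < theta0 /\
    forall theta : R, 0 < theta -> theta <= theta0 ->
    exists n0 : nat, forall n : nat, (n0 <= n)%N ->
    forall (E : {set {set 'I_n}}),
      three_uniform E ->
      (forall i j : 'I_n, i != j ->
         (pair_deg E i j)%:R >=
           Num.min (Num.min (i.+1)%:R (j.+1)%:R) (n%:R / 2) + alpha * n%:R) ->
    forall Rs : {set 'I_n},
      theta ^+ 2 / 2 * n%:R <= #|Rs|%:R ->
      #|Rs|%:R <= theta ^+ 2 * n%:R ->
      (exists L : nat, (0 < L)%N /\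
         forall x y w z : 'I_n,
           x != y -> w != z -> x != w -> x != z -> y != w -> y != z ->
           theta * (#|Rs|%:R ^ (L%:Z - 2)) / 2
             <= #|conn_paths E Rs L x y w z|%:R) ->
    forall x : 'I_n,
      (alpha * n%:R / 3) ^+ (4 * (2 * k))
        <= #|absorbers_outside E Rs (2 * k) x|%:R.
Proof.
exists (1 / 2); split; first lra.
move=> alpha k ha hale hinv.
have hak : alpha * k%:R = 1 by rewrite -hinv mulfV // gt_eqF.
have hkR : 2 <= k%:R :> R by nra.
have hk2 : (2 <= k)%N by rewrite -(ler_nat R).
have hk1 : (0 < k)%N by lia.
exists (alpha / 4); split; first lra.
move=> theta ht hte.
exists (100 * k * k)%N => n hn E _ hdeg Rs _ hRs _ x.
set N := (n%:R : R).
have hN : 100 * k%:R * k%:R <= N by rewrite /N -!natrM ler_nat.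
have hN0 : 0 <= N by rewrite /N ler0n.
have aN : 100 * k%:R <= alpha * N.
  have := ler_wpM2l (ltW ha) hN.
  have -> : alpha * (100 * k%:R * k%:R) = 100 * k%:R * (alpha * k%:R) by ring.
  by rewrite hak mulr1.
have th2 : theta ^+ 2 <= alpha / 32 by nra.
have th2N : theta ^+ 2 * N <= alpha / 32 * N by apply: ler_wpM2r.
have e32 : alpha / 32 * N = (alpha * N) / 32 by ring.
have hal1 : alpha <= 1 by lra.
have hjunk : #|Rs|%:R + (8 * k)%:R <= alpha * N / 6.
  rewrite natrM; lra.
set P := Pc E Rs x k alpha.
have c0 : 0 <= alpha * N / 3 by lra.
have cnt := @count_good _ P R _ c0 (4 * (2 * k)) [::].
have := cnt _; move=> {cnt} cnt.
apply: le_trans.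
  apply: cnt => s hs g.
  apply: (pre_bound ha hak hdeg hk2 hal1 hjunk g).
  by move: hs; rewrite mulnA.
rewrite ler_nat.
rewrite -(@card_imset _ _ (@reord n x k) [set t : (4 * (2 * k)).-tuple 'I_n | goodf P [::] t] (reord_inj hk1)).
apply: subset_leq_card; apply/subsetP => t /imsetP [c].
rewrite inE => gc ->.
exact: (good_abs hk1 gc).
Qed.
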